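(* Let $n\ge 1$ and let $x_k=-\cos\frac{k\pi}{n}$, $k=0,\dots,n$ (the Chebyshev points of the second kind). Let $\theta_0,\dots,\theta_n$ be real numbers and $\hat x_k:=(1+\theta_k)x_k$. Then for every $k\in\{0,\dots,n\}$, \[ \sum_{j\neq k}|r_{jk}(\mathbf{x},\hat{\mathbf{x}})|\le 2.6\,\|\theta\|_\infty\, n^2 . \]
   Context: $r_{jk}(\mathbf{x},\hat{\mathbf{x}}):=\dfrac{\hat x_k-\hat x_j}{x_k-x_j}-1$ for $j\neq k$, and $\|\theta\|_\infty=\max_k|\theta_k|$. *)

(* Defs.v *)
From Stdlib Require Import Reals Lra Lia.
Open Scope R_scope.

Definition cheb (n k : nat) : R := - cos (INR k * PI / INR n).

Definition xhat (n : nat) (theta : nat -> R) (k : nat) : R :=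
  (1 + theta k) * cheb n k.

Definition r_jk (x xh : nat -> R) (j k : nat) : R :=
  (xh k - xh j) / (x k - x j) - 1.

Fixpoint max_abs (theta : nat -> R) (n : nat) : R :=
  match n with
  | O => Rabs (theta O)
  | S m => Rmax (max_abs theta m) (Rabs (theta (S m)))
  end.

Definition sum_except (n k : nat) (f : nat -> R) : R :=
  sum_f_R0 (fun j => if Nat.eq_dec j k then 0 else f j) n.

(* Main.v *)
Require Import Defs.
From Stdlib Require Import Reals Lra Lia.
Open Scope R_scope.
Lemma PI_ub : PI <= 334/100.
Proof. destruct (PI_ineq 2) as [_ H]. unfold tg_alt, PI_tg in H. simpl in H. lra. Qed.
Lemma PI_lb : 28/10 <= PI.
Proof. destruct (PI_ineq 1) as [H _]. unfold tg_alt, PI_tg in H. simpl in H. lra. Qed.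
Definition cc := 1 - PI^2/24.
Lemma cc_pos : 0 < cc.
Proof. unfold cc. pose proof PI_ub; pose proof PI_lb. nra. Qed.
Lemma sin_lin y : 0 <= y -> y <= PI/2 -> cc * y <= sin y.
Proof. intros H0 H1. destruct (sin_bound y 0) as [H _]; try lra.
 unfold sin_approx, sin_term in H. simpl in H. unfold cc.
 assert (y*y <= PI*PI/4) by nra. nra. Qed.

Lemma sin_abs_lb y : Rabs y <= PI/2 -> cc * Rabs y <= Rabs (sin y).
Proof. intros H. pose proof cc_pos. destruct (Rle_dec 0 y).
 - rewrite Rabs_right in H by lra. rewrite !Rabs_right; try lra. apply sin_lin; lra.
   apply Rle_ge. apply sin_ge_0; pose proof PI_lb; lra.
 - rewrite Rabs_left in * by lra. replace y with (- (-y)) by ring. rewrite sin_neg.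
   pose proof (sin_lin (-y)). pose proof (sin_ge_0 (-y)). pose proof PI_lb.
   rewrite Rabs_left1; lra.
Qed.


Lemma key (n k j : nat) (U : R) : (1 <= n)%nat -> (k <= n)%nat -> (j <= n)%nat ->
  0 <= U -> U <= INR k + INR j -> U <= 2 * INR n - INR k - INR j ->
  2 * cc^2 * (PI / (2 * INR n))^2 * U * Rabs (INR k - INR j)
  <= Rabs (cheb n k - cheb n j).
Proof.
  intros Hn Hk Hj HU1 HU2 HU3.
  apply le_INR in Hn, Hk, Hj. simpl in Hn.
  set (q := PI / (2 * INR n)).
  assert (Hq : 0 < q). { unfold q. pose proof PI_lb. apply Rdiv_lt_0_compat; lra. }
  assert (HnQ : INR n * q = PI/2). { unfold q. field. lra. }
  pose proof cc_pos as Hc. pose proof PI_lb.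
  unfold cheb.
  replace (- cos (INR k * PI / INR n) - - cos (INR j * PI / INR n))
    with (cos (INR j * PI / INR n) - cos (INR k * PI / INR n)) by ring.
  rewrite form2.
  replace ((INR j * PI / INR n - INR k * PI / INR n) / 2) with ((INR j - INR k) * q)
    by (unfold q; field; lra).
  replace ((INR j * PI / INR n + INR k * PI / INR n) / 2) with ((INR j + INR k) * q)
    by (unfold q; field; lra).
  rewrite !Rabs_mult.
  replace (Rabs (-2)) with 2 by (rewrite Rabs_left; lra).
  assert (H1 : cc * (Rabs (INR k - INR j) * q) <= Rabs (sin ((INR j - INR k) * q))).
  { replace (Rabs (INR k - INR j) * q) with (Rabs ((INR j - INR k) * q)).
    apply sin_abs_lb. rewrite Rabs_mult, (Rabs_right q) by lra.
    rewrite <- HnQ. apply Rmult_le_compat_r; [lra|].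
    pose proof (pos_INR j); pose proof (pos_INR k).
    apply Rabs_le; lra.
    rewrite Rabs_mult, (Rabs_right q) by lra. f_equal.
    rewrite <- Rabs_Ropp. f_equal. ring. }
  assert (H2 : cc * (U * q) <= Rabs (sin ((INR j + INR k) * q))).
  { pose proof (pos_INR j); pose proof (pos_INR k).
    destruct (Rle_dec ((INR j + INR k) * q) (PI/2)).
    - rewrite Rabs_right.
      + apply Rle_trans with (cc * ((INR j + INR k) * q)).
        * apply Rmult_le_compat_l; [lra|]. apply Rmult_le_compat_r; lra.
        * apply sin_lin; nra.
      + apply Rle_ge, sin_ge_0; nra.
    - rewrite <- sin_PI_x.
      assert (E : PI - (INR j + INR k) * q = (2 * INR n - INR k - INR j) * q).
      { replace PI with (2 * (INR n * q)) by lra. ring. }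
      rewrite E.
      assert (0 <= (2 * INR n - INR k - INR j) * q) by (apply Rmult_le_pos; lra).
      assert ((2 * INR n - INR k - INR j) * q <= PI/2) by lra.
      rewrite Rabs_right.
      + apply Rle_trans with (cc * ((2 * INR n - INR k - INR j) * q)).
        * apply Rmult_le_compat_l; [lra|]. apply Rmult_le_compat_r; lra.
        * apply sin_lin; lra.
      + apply Rle_ge, sin_ge_0; lra. }
  assert (0 <= cc * (Rabs (INR k - INR j) * q)).
  { apply Rmult_le_pos; [lra|]. apply Rmult_le_pos; [apply Rabs_pos|lra]. }
  assert (0 <= cc * (U * q)) by (apply Rmult_le_pos; nra).
  apply Rle_trans with (2 * (cc * (Rabs (INR k - INR j) * q)) * (cc * (U * q))).
  - right; ring.
  - apply Rmult_le_compat; try lra.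
Qed.
Lemma ccPI : 40/13 <= (cc*PI)^2.
Proof. pose proof PI_ub; pose proof PI_lb. unfold cc.
 assert (0 <= (PI-28/10)*(334/100-PI)*(PI+614/100)).
 { apply Rmult_le_pos; [apply Rmult_le_pos|]; lra. }
 assert (176/100 <= PI - PI^3/24) by nra.
 replace ((1 - PI^2/24)*PI) with (PI - PI^3/24) by field. nra. Qed.

Definition bnd (n k j : nat) : bool :=
  (Nat.eqb j 0 || Nat.eqb j n || Nat.eqb k 0 || Nat.eqb k n)%bool.
Definition h (n k j : nat) : R :=
  let D := Rabs (INR k - INR j) in
  if bnd n k j then 1 / (D * D) else 1 / (D * (D + 1)).

Lemma D_ge1 (k j : nat) : j <> k -> 1 <= Rabs (INR k - INR j).
Proof. intros H. destruct (Nat.lt_ge_cases j k) as [L|L].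
 - assert (INR (S j) <= INR k) by (apply le_INR; lia).
   rewrite S_INR in H0. rewrite Rabs_right; lra.
 - assert (k < j)%nat by lia. assert (INR (S k) <= INR j) by (apply le_INR; lia).
   rewrite S_INR in H1. rewrite Rabs_left; lra.
Qed.

Lemma inner (n : nat) (U D X : R) : (1 <= n)%nat -> 1 <= U -> 1 <= D ->
  2 * cc^2 * (PI / (2 * INR n))^2 * U * D <= X ->
  0 < X /\ 2 / X <= 13/10 * INR n ^ 2 * (1 / (D * U)).
Proof.
  intros Hn HU HD HX. apply le_INR in Hn. simpl in Hn.
  pose proof ccPI as HA. pose proof cc_pos. pose proof PI_lb.
  set (K0 := 2 * cc^2 * (PI / (2 * INR n))^2).
  assert (HK : K0 = (cc*PI)^2 / (2 * INR n ^ 2)) by (unfold K0; field; lra).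
  assert (HK0 : 0 < K0). { rewrite HK. apply Rdiv_lt_0_compat; [lra|]. assert (1 <= INR n ^ 2) by (rewrite <- (pow1 2); apply pow_incr; lra). lra. }
  assert (HP : 0 < K0 * U * D). { apply Rmult_lt_0_compat; [apply Rmult_lt_0_compat|]; lra. }
  assert (HX2 : K0 * U * D <= X) by exact HX. split; [lra|].
  apply Rle_trans with (2 / (K0 * U * D)).
  - unfold Rdiv. apply Rmult_le_compat_l; [lra|]. apply Rinv_le_contravar; lra.
  - replace (2 / (K0 * U * D)) with (INR n ^ 2 * (4 / (cc*PI)^2) * (1 / (D*U))).
    2:{ rewrite HK. field. repeat split; try lra. }
    apply Rmult_le_compat_r.
    + unfold Rdiv. rewrite Rmult_1_l. left. apply Rinv_0_lt_compat. apply Rmult_lt_0_compat; lra.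
    + rewrite (Rmult_comm (13/10)). apply Rmult_le_compat_l; [apply pow_le; lra|].

      unfold Rdiv. apply Rle_trans with (4 * / (40/13)).
      * apply Rmult_le_compat_l; [lra|]. apply Rinv_le_contravar; lra.
      * lra.
Qed.

Lemma term_bound (n k j : nat) : (1 <= n)%nat -> (k <= n)%nat -> (j <= n)%nat -> j <> k ->
  0 < Rabs (cheb n k - cheb n j) /\
  2 / Rabs (cheb n k - cheb n j) <= 13/10 * INR n ^ 2 * h n k j.
Proof.
  intros Hn Hk Hj Hjk.
  pose proof (D_ge1 k j Hjk) as HD.
  pose proof (le_INR _ _ Hk). pose proof (le_INR _ _ Hj). pose proof (pos_INR k). pose proof (pos_INR j).
  unfold h. cbv zeta. set (D := Rabs (INR k - INR j)) in *.
  assert (HDk : D <= INR k + INR j /\ D <= 2 * INR n - INR k - INR j).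
  { unfold D, Rabs; destruct Rcase_abs; lra. }
  case_eq (bnd n k j); intros Hb.
  - apply inner with (U := D); try lra; auto.
    apply key; auto; lra.
  - unfold bnd in Hb. rewrite !Bool.orb_false_iff, !Nat.eqb_neq in Hb.
    destruct Hb as [[[B1 B2] B3] B4].
    assert (1 <= INR j) by (apply (le_INR 1); lia).
    assert (1 <= INR k) by (apply (le_INR 1); lia).
    assert (INR j + 1 <= INR n) by (rewrite <- S_INR; apply le_INR; lia).
    assert (INR k + 1 <= INR n) by (rewrite <- S_INR; apply le_INR; lia).
    apply inner with (U := D + 1); try lra; auto.
    apply key; auto; unfold D, Rabs; destruct Rcase_abs; lra.
Qed.

Lemma R1 x : 1 <= x -> 1/((x+1)*(x+1)) <= 1/x - 1/(x+1).
Proof. intros H. replace (1/x - 1/(x+1)) with (1/(x*(x+1))) by (field; lra).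
 unfold Rdiv. rewrite !Rmult_1_l. apply Rinv_le_contravar; nra. Qed.
Lemma R2 m : 1 <= m -> 1/(m*m) <= 2/m - 2/(m+1).
Proof. intros H. replace (2/m - 2/(m+1)) with (1/(m*((m+1)/2))) by (field; lra).
 unfold Rdiv. rewrite !Rmult_1_l. apply Rinv_le_contravar; nra. Qed.
Lemma R3 m : 1 <= m -> 1/(m*(m+1)) = 1/m - 1/(m+1).
Proof. intros H. field; lra. Qed.
Lemma R4 m : 1 <= m -> 1/(m*m) <= 1/m.
Proof. intros H. unfold Rdiv. rewrite !Rmult_1_l. apply Rinv_le_contravar; nra. Qed.

Lemma hL n k j : (j < k)%nat -> h n k j = if bnd n k j then 1/((INR k - INR j)*(INR k - INR j))
   else 1/((INR k - INR j)*(INR k - INR j + 1)).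
Proof. intros H. apply lt_INR in H. unfold h. cbv zeta. rewrite Rabs_right by lra. reflexivity. Qed.
Lemma hR n k j : (k < j)%nat -> h n k j = if bnd n k j then 1/((INR j - INR k)*(INR j - INR k))
   else 1/((INR j - INR k)*(INR j - INR k + 1)).
Proof. intros H. apply lt_INR in H. unfold h. cbv zeta. rewrite Rabs_left by lra.
  replace (- (INR k - INR j)) with (INR j - INR k) by ring. reflexivity. Qed.
Lemma bnd_t n k j : (j = 0 \/ j = n \/ k = 0 \/ k = n)%nat -> bnd n k j = true.
Proof. intros H. unfold bnd. destruct H as [ -> | [ -> | [ -> | -> ] ] ];
  rewrite ?Nat.eqb_refl, ?Bool.orb_true_r; reflexivity. Qed.
Lemma bnd_f n k j : (j <> 0 -> j <> n -> k <> 0 -> k <> n)%nat -> bnd n k j = false.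
Proof. intros H. Abort.
Lemma bnd_f n k j : (j <> 0)%nat -> (j <> n)%nat -> (k <> 0)%nat -> (k <> n)%nat -> bnd n k j = false.
Proof. intros. unfold bnd. apply Nat.eqb_neq in H, H0, H1, H2. rewrite H, H0, H1, H2. reflexivity. Qed.

Definition F (n k : nat) (j : nat) : R := if Nat.eq_dec j k then 0 else h n k j.

Lemma sum_k0 n : (1 <= n)%nat -> forall N, (1 <= N <= n)%nat ->
  sum_f_R0 (F n 0) N <= 2 - 1 / INR N.
Proof.
  intros Hn N. induction N as [|N IH]; intros HN; [lia|].
  rewrite tech5. unfold F at 2. destruct (Nat.eq_dec (S N) 0); [lia|].
  rewrite hR by lia. rewrite bnd_t by auto. rewrite S_INR. simpl INR at 2 3 4 5.
  replace (INR N + 1 - 0) with (INR N + 1) by ring.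
  destruct N as [|N'].
  - simpl. unfold F. destruct (Nat.eq_dec 0 0); [|lia]. lra.
  - set (x := INR (S N')). assert (1 <= x) by (unfold x; rewrite S_INR; pose proof (pos_INR N'); lra).
    assert (IH' := IH ltac:(lia)). fold x in IH'. pose proof (R1 x H). lra.
Qed.

Lemma sum_kn n : (1 <= n)%nat -> forall N, (N < n)%nat ->
  sum_f_R0 (F n n) N <= 2 / (INR n - INR N) - 1 / INR n.
Proof.
  intros Hn N. assert (Hn' : 1 <= INR n) by (apply (le_INR 1); lia).
  induction N as [|N IH]; intros HN.
  - simpl. unfold F. destruct (Nat.eq_dec 0 n); [lia|].
    rewrite hL by lia. rewrite bnd_t by auto. simpl INR.
    replace (INR n - 0) with (INR n) by ring. pose proof (R4 _ Hn').
    replace (2 / INR n - 1/ INR n) with (1 / INR n) by (field; lra). lra.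
  - rewrite tech5. unfold F at 2. destruct (Nat.eq_dec (S N) n); [lia|].
    rewrite hL by lia. rewrite bnd_t by auto. rewrite S_INR.
    assert (INR (S (S N)) <= INR n) by (apply le_INR; lia). rewrite !S_INR in H.
    set (m := INR n - (INR N + 1)). assert (1 <= m) by (unfold m; lra).
    replace (INR n - INR N) with (m + 1) in IH by (unfold m; ring).
    pose proof (R2 m H0). specialize (IH ltac:(lia)). lra.
Qed.

Lemma sum_mid1 n k : (0 < k < n)%nat -> forall N, (N < k)%nat ->
  sum_f_R0 (F n k) N <= 1 / (INR k * INR k) + 1 / (INR k - INR N) - 1 / INR k.
Proof.
  intros Hk N. assert (Hk' : 1 <= INR k) by (apply (le_INR 1); lia).
  induction N as [|N IH]; intros HN.
  - simpl. unfold F. destruct (Nat.eq_dec 0 k); [lia|].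
    rewrite hL by lia. rewrite bnd_t by auto. simpl INR.
    replace (INR k - 0) with (INR k) by ring. lra.
  - rewrite tech5. unfold F at 2. destruct (Nat.eq_dec (S N) k); [lia|].
    rewrite hL by lia. rewrite bnd_f by lia. rewrite S_INR.
    assert (INR (S (S N)) <= INR k) by (apply le_INR; lia). rewrite !S_INR in H.
    set (m := INR k - (INR N + 1)). assert (1 <= m) by (unfold m; lra).
    replace (INR k - INR N) with (m + 1) in IH by (unfold m; ring).
    rewrite (R3 m H0). specialize (IH ltac:(lia)). lra.
Qed.

Lemma sum_mid2 n k : (0 < k < n)%nat -> forall i, (k + i < n)%nat ->
  sum_f_R0 (F n k) (k + i) <= 1 / (INR k * INR k) + 1 - 1 / INR k + 1 - 1 / (INR i + 1).
Proof.
  intros Hk i. assert (Hk' : 1 <= INR k) by (apply (le_INR 1); lia).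
  induction i as [|i IH]; intros Hi.
  - rewrite Nat.add_0_r. destruct k as [|k']; [lia|]. rewrite tech5.
    unfold F at 2. destruct (Nat.eq_dec (S k') (S k')); [|lia].
    pose proof (sum_mid1 n (S k') Hk k' ltac:(lia)). rewrite S_INR in H |- *.
    replace (INR k' + 1 - INR k') with 1 in H by ring. simpl INR. lra.
  - replace (k + S i)%nat with (S (k + i)) by lia. rewrite tech5.
    unfold F at 2. destruct (Nat.eq_dec (S (k+i)) k); [lia|].
    rewrite hR by lia. rewrite bnd_f by lia. rewrite S_INR, plus_INR, S_INR.
    replace (INR k + INR i + 1 - INR k) with (INR i + 1) by ring.
    assert (1 <= INR i + 1) by (pose proof (pos_INR i); lra).
    rewrite (R3 _ H). specialize (IH ltac:(lia)). lra.
Qed.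

Lemma sum_all n k : (1 <= n)%nat -> (k <= n)%nat -> sum_f_R0 (F n k) n <= 2.
Proof.
  intros Hn Hk. assert (Hn' : 1 <= INR n) by (apply (le_INR 1); lia).
  destruct (Nat.eq_dec k 0) as [->|Hk0].
  - pose proof (sum_k0 n Hn n ltac:(lia)). assert (0 < 1/ INR n) by (apply Rdiv_lt_0_compat; lra). lra.
  - destruct (Nat.eq_dec k n) as [->|Hkn].
    + destruct n as [|n']; [lia|]. rewrite tech5. unfold F at 2.
      destruct (Nat.eq_dec (S n') (S n')); [|lia].
      pose proof (sum_kn (S n') Hn n' ltac:(lia)). rewrite S_INR in H.
      replace (INR n' + 1 - INR n') with 1 in H by ring.
      assert (0 < 1/ (INR n' + 1)) by (apply Rdiv_lt_0_compat; pose proof (pos_INR n'); lra). lra.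
    + assert (Hkk : (0 < k < n)%nat) by lia.
      replace n with (S (k + (n - k - 1))) at 2 by lia. rewrite tech5.
      pose proof (sum_mid2 n k Hkk (n - k - 1) ltac:(lia)).
      replace (S (k + (n - k - 1))) with n by lia.
      unfold F at 2. destruct (Nat.eq_dec n k); [lia|].
      rewrite hR by lia. rewrite bnd_t by auto.
      assert (Hk' : 1 <= INR k) by (apply (le_INR 1); lia).
      rewrite minus_INR in H by lia. rewrite minus_INR in H by lia. simpl INR in H.
      assert (INR k + 1 <= INR n) by (rewrite <- S_INR; apply le_INR; lia).
      replace (INR n - INR k - 1 + 1) with (INR n - INR k) in H by ring.
      pose proof (R4 _ Hk'). pose proof (R4 (INR n - INR k) ltac:(lra)). lra.
Qed.

Lemma max_abs_ge (theta : nat -> R) (n j : nat) : (j <= n)%nat -> Rabs (theta j) <= max_abs theta n.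
Proof.
  induction n as [|n IH]; intros H.
  - assert (j = 0%nat) by lia. subst. simpl. lra.
  - simpl. destruct (Nat.eq_dec j (S n)) as [->|Hne].
    + apply Rmax_r.
    + eapply Rle_trans; [apply IH; lia| apply Rmax_l].
Qed.

Lemma cheb_bound n k : Rabs (cheb n k) <= 1.
Proof. unfold cheb. rewrite Rabs_Ropp. apply Rabs_le. apply COS_bound. Qed.

Theorem theorem1 (n : nat) (theta : nat -> R) (k : nat) :
  (1 <= n)%nat -> (k <= n)%nat ->
  sum_except n k (fun j => Rabs (r_jk (cheb n) (xhat n theta) j k))
  <= (26 / 10) * max_abs theta n * INR n ^ 2.
Proof.
  intros Hn Hk. unfold sum_except.
  set (M := max_abs theta n).
  assert (HM : 0 <= M) by (eapply Rle_trans; [apply Rabs_pos| apply (max_abs_ge theta n 0); lia]).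
  set (C := 13/10 * M * INR n ^ 2).
  apply Rle_trans with (sum_f_R0 (fun j => F n k j * C) n).
  - apply sum_Rle. intros j Hj. unfold F.
    destruct (Nat.eq_dec j k) as [_|Hjk]; [lra|].
    destruct (term_bound n k j Hn Hk Hj Hjk) as [Hpos Hb].
    set (xk := cheb n k) in *. set (xj := cheb n j) in *.
    assert (Hne : xk - xj <> 0) by (intro E; rewrite E, Rabs_R0 in Hpos; lra).
    unfold r_jk, xhat. fold xk xj.
    replace (((1 + theta k) * xk - (1 + theta j) * xj) / (xk - xj) - 1)
      with ((theta k * xk - theta j * xj) * / (xk - xj)) by (field; auto).
    rewrite Rabs_mult, Rabs_inv.
    assert (Hnum : Rabs (theta k * xk - theta j * xj) <= M * 2).
    { unfold Rminus. eapply Rle_trans; [apply Rabs_triang|]. rewrite Rabs_Ropp, !Rabs_mult.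
      assert (Rabs (theta k) <= M) by (apply max_abs_ge; exact Hk).
      assert (Rabs (theta j) <= M) by (apply max_abs_ge; exact Hj).
      assert (Rabs xk <= 1) by apply cheb_bound.
      assert (Rabs xj <= 1) by apply cheb_bound.
      pose proof (Rabs_pos (theta k)). pose proof (Rabs_pos (theta j)).
      pose proof (Rabs_pos xk). pose proof (Rabs_pos xj).
      assert (Rabs (theta k) * Rabs xk <= M * 1) by (apply Rmult_le_compat; lra).
      assert (Rabs (theta j) * Rabs xj <= M * 1) by (apply Rmult_le_compat; lra).
      lra. }
    assert (0 < / Rabs (xk - xj)) by (apply Rinv_0_lt_compat; lra).
    apply Rle_trans with (M * 2 * / Rabs (xk - xj)).
    + apply Rmult_le_compat_r; lra.
    + unfold C. replace (M * 2 * / Rabs (xk - xj)) with (M * (2 / Rabs (xk - xj))) by (unfold Rdiv; ring).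
      replace (h n k j * (13 / 10 * M * INR n ^ 2)) with (M * (13/10 * INR n ^ 2 * h n k j)) by ring.
      apply Rmult_le_compat_l; lra.
  - rewrite <- scal_sum. pose proof (sum_all n k Hn Hk).
    assert (0 <= C) by (unfold C; apply Rmult_le_pos; [apply Rmult_le_pos; lra| apply pow_le, pos_INR]).
    replace (26/10 * M * INR n ^ 2) with (C * 2) by (unfold C; field).
    apply Rmult_le_compat_l; lra.
Qed.
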